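(* In the disclosure game described in the context, an ordered partition $(\mathcal{A},\le_P)$ of $E$ is the equilibrium partition if and only if every $A\in\mathcal{A}$ is the largest lower contour set in $E\setminus\bigcup_{A'<_P A}A'$ that minimizes $\xi$; that is, $A$ solves $$\min_L \xi(L)\quad\text{s.t. } L \text{ is a lower contour set in } E\setminus\textstyle\bigcup_{A'<_PA}A',$$ and every $L$ solving this problem satisfies $L\subset A$.
   Context: Disclosure game. A state $\omega\in\{G,B\}$ is drawn with prior probability $\pi_0\in(0,1)$ on $G$. The evidence space $E$ is a finite or countably infinite set; $F_G,F_B$ are probability distributions on $E$ such that for every $e\in E$ at least one of $F_G(e),F_B(e)$ is strictly positive. The sender privately observes evidence $e$ drawn from $F_\omega$. A disclosure rule is a preorder $\precsim$ on $E$ (reflexive and transitive) satisfying: for every sequence $e_1\succsim e_2\succsim\cdots$ in $E$ there is $N\ge1$ with $e_N\precsim e_n$ for all $n\ge N$. The sender with evidence $e$ sends a message $m\in E$ with $m\precsim e$; the receiver takes an action $a\in\mathbb{R}$; for every $\mu\in[0,1]$ the receiver's expected-payoff maximization problem $\max_a \mu u_R(a,G)+(1-\mu)u_R(a,B)$ has a unique solution $\phi(\mu)$, with $\phi$ strictly increasing; the sender's payoff is $a$. For nonempty $A\subset E$ let $\nu(A)=\frac{F_G(A)\pi_0}{F_G(A)\pi_0+F_B(A)(1-\pi_0)}$ and $\xi(A)=\phi(\nu(A))$. For nonempty $A\subset E$, a nonempty $L\subset A$ is a lower contour set in $A$ if for all $e\in L$, $e'\in A$, $e'\precsim e$ implies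 $e'\in L$. An ordered partition of $E$ is a partition $\mathcal{A}$ of $E$ into nonempty sets with a total order $\le_P$ on $\mathcal{A}$ ($<_P$ its strict part). The equilibrium partition is the (unique, when it exists) ordered partition $(\mathcal{A},\le_P)$ of $E$ such that: (1) $A_1<_PA_2$ implies $\xi(A_1)<\xi(A_2)$; (2) for $A_1,A_2\in\mathcal{A}$, $e_1\in A_1$, $e_2\in A_2$, $e_1\precsim e_2$ implies $A_1\le_P A_2$; (3) for all $A\in\mathcal{A}$ and all lower contour sets $L$ in $A$, $\xi(L)\ge\xi(A)$. (Such a partition exists iff a truth-leaning equilibrium exists, and its cells are the level sets of the sender's equilibrium value function.) *)

(* Defs.v *)
From HB Require Import structures.
From mathcomp Require Import all_boot all_order all_algebra.
From mathcomp Require Import all_classical all_reals.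
From mathcomp Require Import ereal esum.
Set Implicit Arguments. Unset Strict Implicit. Unset Printing Implicit Defensive.
Import Order.TTheory GRing.Theory Num.Theory.
Local Open Scope classical_set_scope.
Local Open Scope ring_scope.

Inductive state := G | B.

Section Disclosure.
Variables (R : realType) (E : countType).

Definition is_distr (F : E -> R) : Prop :=
  (forall e, 0 <= F e) /\ (\esum_(e in [set: E]) (F e)%:E = 1%E).

Definition prob (F : E -> R) (A : set E) : R := fine (\esum_(e in A) (F e)%:E).

Definition nu (pi0 : R) (FG FB : E -> R) (A : set E) : R :=
  prob FG A * pi0 / (prob FG A * pi0 + prob FB A * (1 - pi0)).

Definition xi (phi : R -> R) (pi0 : R) (FG FB : E -> R) (A : set E) : R :=
  phi (nu pi0 FG FB A).

Definition disclosure_rule (le : E -> E -> Prop) : Prop :=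
  (forall e, le e e) /\
  (forall e1 e2 e3, le e1 e2 -> le e2 e3 -> le e1 e3) /\
  (forall s : nat -> E, (forall n, le (s n.+1) (s n)) ->
     exists N, (1 <= N)%N /\ forall n, (N <= n)%N -> le (s N) (s n)).

Definition receiver_best_response (uR : R -> state -> R) (phi : R -> R) : Prop :=
  forall mu, 0 <= mu <= 1 ->
    forall a, a <> phi mu ->
      mu * uR a G + (1 - mu) * uR a B < mu * uR (phi mu) G + (1 - mu) * uR (phi mu) B.

Definition lower_contour (le : E -> E -> Prop) (A L : set E) : Prop :=
  L !=set0 /\ L `<=` A /\
  (forall e e', L e -> A e' -> le e' e -> L e').

Definition ordered_partition (P : set (set E)) (leP : set E -> set E -> Prop) : Prop :=
  (forall A, P A -> A !=set0) /\
  (forall A1 A2, P A1 -> P A2 -> A1 <> A2 -> A1 `&` A2 = set0) /\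
  (forall e, exists2 A, P A & A e) /\
  (forall A, P A -> leP A A) /\
  (forall A1 A2, P A1 -> P A2 -> leP A1 A2 -> leP A2 A1 -> A1 = A2) /\
  (forall A1 A2 A3, P A1 -> P A2 -> P A3 -> leP A1 A2 -> leP A2 A3 -> leP A1 A3) /\
  (forall A1 A2, P A1 -> P A2 -> leP A1 A2 \/ leP A2 A1).

Definition ltP (leP : set E -> set E -> Prop) (A1 A2 : set E) : Prop :=
  leP A1 A2 /\ A1 <> A2.

Definition equilibrium_partition (le : E -> E -> Prop) (xiF : set E -> R)
    (P : set (set E)) (leP : set E -> set E -> Prop) : Prop :=
  ordered_partition P leP /\
  (forall A1 A2, P A1 -> P A2 -> ltP leP A1 A2 -> xiF A1 < xiF A2) /\
  (forall A1 A2 e1 e2, P A1 -> P A2 -> A1 e1 -> A2 e2 -> le e1 e2 -> leP A1 A2) /\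
  (forall A L, P A -> lower_contour le A L -> xiF A <= xiF L).

Definition remaining (P : set (set E)) (leP : set E -> set E -> Prop) (A : set E)
  : set E :=
  [set e | ~ exists2 A', P A' /\ ltP leP A' A & A' e].

Definition minimizer (le : E -> E -> Prop) (xiF : set E -> R) (S L : set E) : Prop :=
  lower_contour le S L /\ forall L', lower_contour le S L' -> xiF L <= xiF L'.

End Disclosure.

(* Main.v *)
Require Import Defs.
From mathcomp Require Import all_boot all_order all_algebra.
From mathcomp Require Import all_classical all_reals.
From mathcomp Require Import ereal esum lra ring finmap.
Import Order.TTheory GRing.Theory Num.Theory.
Local Open Scope classical_set_scope.
Local Open Scope ring_scope.

Lemma esumZ (R : realType) (E : choiceType) (S : set E) (a : E -> \bar R) (r : R) :
  0 <= r -> (forall i, 0 <= a i)%E ->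
  (\esum_(i in S) (r%:E * a i) = r%:E * \esum_(i in S) a i)%E.
Proof.
move=> r0 a0; rewrite /esum -ereal_supZl //; last first.
  by apply/set0P; exists (\sum_(x \in set0) a x)%E; exists set0 => //; exact: fsets_set0.
congr ereal_sup; apply/seteqP; split => x /=.
- move=> [A [finA AS] <-]; exists (\sum_(x \in A) a x)%E; first by exists A.
  by rewrite !fsbig_finite //= ge0_sume_distrr.
- move=> [y [A [finA AS] <-] <-]; exists A => //.
  by rewrite !fsbig_finite //= ge0_sume_distrr.
Qed.

Lemma esum_sub (R : realType) (E : choiceType) (S T : set E) (a : E -> \bar R) :
  (forall i, 0 <= a i)%E -> S `<=` T ->
  (\esum_(i in S) a i <= \esum_(i in T) a i)%E.
Proof.
move=> a0 ST; rewrite [X in (X <= _)%E]esum_mkcond [X in (_ <= X)%E]esum_mkcond.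
apply: le_esum => i _; case: ifPn => iS; case: ifPn => iT //.
by move: iT; rewrite notin_setE => /(_ (ST _ (set_mem iS))).
Qed.

Section M.
Context {R : realType} {E : countType}.
Implicit Types (F : E -> R) (S T : set E).

Lemma esum_fin (F : E -> R) (S : set E) : is_distr F ->
  (\esum_(e in S) (F e)%:E = (prob F S)%:E)%E.
Proof.
move=> [F0 F1]; rewrite /prob fineK //.
have h0 : (0 <= \esum_(e in S) (F e)%:E)%E by apply: esum_ge0 => i _; rewrite lee_fin.
have h1 : (\esum_(e in S) (F e)%:E <= 1)%E.
  by rewrite -F1; apply: esum_sub => // i; rewrite lee_fin.
by rewrite ge0_fin_numE // (le_lt_trans h1) // ltry.
Qed.

Lemma prob_ge0 F S : is_distr F -> 0 <= prob F S.
Proof.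
move=> hF; rewrite -lee_fin -esum_fin //; apply: esum_ge0 => i _.
by rewrite lee_fin; case: hF.
Qed.

Lemma prob_le F S T : is_distr F -> S `<=` T -> prob F S <= prob F T.
Proof.
move=> hF ST; rewrite -lee_fin -!esum_fin //; apply: esum_sub => // i.
by rewrite lee_fin; case: hF.
Qed.

Lemma probT F : is_distr F -> prob F setT = 1.
Proof. by move=> hF; have := @esum_fin F setT hF; case: hF => _ -> [->]. Qed.

Lemma probU F S T : is_distr F -> S `&` T = set0 ->
  prob F (S `|` T) = prob F S + prob F T.
Proof.
move=> hF ST; apply: EFin_inj; rewrite EFinD -!esum_fin //.
rewrite (esumID S) //; last by move=> i _; rewrite lee_fin; case: hF.
rewrite setIUl setIid (_ : T `&` S = set0) ?setU0; last by rewrite setIC.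
by rewrite setIUl setICr set0U (_ : T `&` ~` S = T) //; apply/setIidPl => x Tx Sx;
  have : (S `&` T) x by []; rewrite ST.
Qed.

Lemma prob_ge1 F S e : is_distr F -> S e -> F e <= prob F S.
Proof.
move=> hF Se; rewrite -lee_fin -esum_fin //.
rewrite -(@esum_set1 R E e (fun e => (F e)%:E)); last by rewrite lee_fin; case: hF.
by apply: esum_sub => [i|x ->//]; rewrite lee_fin; case: hF.
Qed.

Lemma prob0 F : is_distr F -> prob F set0 = 0.
Proof. by move=> hF; rewrite /prob esum_set0. Qed.

Lemma probZ F S (r : R) : is_distr F -> 0 <= r ->
  (\esum_(e in S) (r * F e)%:E = (r * prob F S)%:E)%E.
Proof.
move=> hF r0; rewrite EFinM -esum_fin // -esumZ //;
  last by move=> i; rewrite lee_fin; case: hF.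
Qed.

End M.

Section M2.
Context {R : realType} {E : countType}.
Implicit Types (F : E -> R) (S T L W : set E).

Lemma esum_part (a : E -> \bar R) (C : set (set E)) L :
  (forall e, 0 <= a e)%E ->
  (forall C1 C2 e, C C1 -> C C2 -> C1 e -> C2 e -> C1 = C2) ->
  (forall e, L e -> exists2 c, C c & c e) ->
  (\esum_(e in L) a e = \esum_(c in C) \esum_(e in L `&` c) a e)%E.
Proof.
move=> a0 dj cov; rewrite esum_esum; last by move=> *; exact: a0.
apply: (reindex_esum (C `*`` (fun c => L `&` c)) L snd a); split.
- by move=> [c e] /= [_ []].
- move=> [c1 e1] [c2 e2] /set_mem [h1 [_ h1']] /set_mem [h2 [_ h2']] /= ee.
  by subst; congr pair; exact: (dj _ _ _ h1 h2 h1' h2').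
- move=> e Le; have [c hc ce] := cov e Le; by exists (c, e).
Qed.

Lemma part_ineq F1 F2 (x y : R) (C : set (set E)) L :
  is_distr F1 -> is_distr F2 -> 0 <= x -> 0 <= y ->
  (forall C1 C2 e, C C1 -> C C2 -> C1 e -> C2 e -> C1 = C2) ->
  (forall e, L e -> exists2 c, C c & c e) ->
  (forall c, C c -> y * prob F2 (L `&` c) <= x * prob F1 (L `&` c)) ->
  y * prob F2 L <= x * prob F1 L.
Proof.
move=> h1 h2 x0 y0 dj cov hc; rewrite -lee_fin -!probZ //.
have g1 e : (0 <= (x * F1 e)%:E)%E by rewrite lee_fin mulr_ge0 //; case: h1.
have g2 e : (0 <= (y * F2 e)%:E)%E by rewrite lee_fin mulr_ge0 //; case: h2.
rewrite (esum_part _ _ _ g1 dj cov) (esum_part _ _ _ g2 dj cov).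
by apply: le_esum => c Cc; rewrite !probZ // lee_fin; apply: hc.
Qed.

Lemma tail F (eps : R) : is_distr F -> 0 < eps ->
  exists2 Fin : set E, finite_set Fin & prob F (~` Fin) < eps.
Proof.
move=> hF e0.
have : ((1 - eps)%:E < \esum_(e in [set: E]) (F e)%:E)%E.
  by case: hF => _ ->; rewrite lte_fin ltrBlDr ltrDl.
move=> /ereal_sup_gt [_ [A [finA _] <-]] hA; exists A => //.
have : prob F (A `|` ~` A) = prob F A + prob F (~` A).
  by apply: probU => //; rewrite setICr.

rewrite setUCr probT // => h.
have : (\sum_(i \in A) (F i)%:E <= (prob F A)%:E)%E.
  rewrite -esum_fin // esum_fset //; move=> i _; rewrite lee_fin; case: hF => //.
move=> /(lt_le_trans hA); rewrite lte_fin => h2.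
move: h2 h; lra.
Qed.

Lemma chain_fin (G : set (set E)) W (s : seq E) :
  (exists G0, G G0) ->
  (forall G1 G2, G G1 -> G G2 -> G1 `<=` G2 \/ G2 `<=` G1) ->
  (forall e, (forall G1, G G1 -> G1 e) -> W e) ->
  exists2 G0, G G0 & forall e, e \in s -> G0 e -> W e.
Proof.
move=> [G0 hG0] ch hW; elim: s => [|e s [G1 hG1 IH]].
  by exists G0.
have [We|nWe] := pselect (W e).
  by exists G1 => // e'; rewrite in_cons => /orP [/eqP -> //|]; apply: IH.
have : ~ (forall G2, G G2 -> G2 e) by move=> h; apply: nWe; apply: hW.
move=> /existsNP [G2 /not_implyP [hG2 nG2e]].
have [s12|s21] := ch _ _ hG1 hG2.
  exists G1 => // e'; rewrite in_cons => /orP [/eqP -> /s12 //|]; apply: IH.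
exists G2 => // e'; rewrite in_cons => /orP [/eqP -> //|] es /s21; exact: IH.
Qed.

Lemma lim_ineq F1 F2 (x y : R) (G : set (set E)) W :
  is_distr F1 -> is_distr F2 -> 0 <= x -> 0 <= y ->
  (exists G0, G G0) ->
  (forall G1 G2, G G1 -> G G2 -> G1 `<=` G2 \/ G2 `<=` G1) ->
  (forall G1, G G1 -> W `<=` G1) ->
  (forall e, (forall G1, G G1 -> G1 e) -> W e) ->
  (forall G1, G G1 -> y * prob F2 G1 <= x * prob F1 G1) ->
  y * prob F2 W <= x * prob F1 W.
Proof.
move=> h1 h2 x0 y0 ne ch Wsub Winf hG.
rewrite leNgt; apply/negP => hlt.
set d := y * prob F2 W - x * prob F1 W.
have d0 : 0 < d by rewrite subr_gt0.
have [Fin finF hFin] := tail _ _ h1 (divr_gt0 d0 (ltr_pwDr ltr01 x0)).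
have [G0 hG0 hG0W] := chain_fin G W (enum_fset (fset_set Fin)) ne ch Winf.
have WG0 := Wsub _ hG0.
have eG0 : G0 = W `|` (G0 `&` ~` W).
  by rewrite setUIr setUCr setIT; apply/esym/setUidPr.
have hA : prob F1 G0 = prob F1 W + prob F1 (G0 `&` ~` W).
  rewrite {1}eG0 probU //; apply/seteqP; split => e //= [We [_ nWe]] //.
have hsub : G0 `&` ~` W `<=` ~` Fin.
  move=> e [G0e nWe] Fe; apply: nWe; apply: hG0W G0e.
  by have hh : e \in fset_set Fin by rewrite in_fset_set //; apply/mem_set.
have hB : prob F1 (G0 `&` ~` W) <= prob F1 (~` Fin) by apply: prob_le.
have hxt : x * prob F1 (~` Fin) < d.
  have : x * prob F1 (~` Fin) <= x * (d / (x + 1)).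
    by apply: ler_wpM2l => //; apply: ltW.
  have q0 : 0 < d / (x + 1) by apply: divr_gt0 => //; apply: ltr_wpDl.
  have hq : d = (d / (x + 1)) * (x + 1).
    by rewrite divfK // gt_eqF // ltr_wpDl.
  move/le_lt_trans; apply; rewrite {2}hq; move: q0 x0.
  set q := d / (x + 1); nra.
have hW2 : y * prob F2 W <= y * prob F2 G0 by apply: ler_wpM2l => //; apply: prob_le.
have := hG _ hG0; rewrite hA mulrDr => h.
have : x * prob F1 (G0 `&` ~` W) < d.
  by apply: le_lt_trans hxt; apply: ler_wpM2l.
rewrite /d; lra.
Qed.

End M2.

Section Hg.
Context {R : realType} {E : countType}.
Implicit Types (F : E -> R) (S T L W : set E).

Definition Hg F1 F2 (x y : R) S := x * prob F1 S - y * prob F2 S.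

Lemma Hg0 F1 F2 x y : is_distr F1 -> is_distr F2 -> Hg F1 F2 x y set0 = 0.
Proof. by move=> h1 h2; rewrite /Hg !prob0 // !mulr0 subrr. Qed.

Lemma HgU F1 F2 x y S T : is_distr F1 -> is_distr F2 -> S `&` T = set0 ->
  Hg F1 F2 x y (S `|` T) = Hg F1 F2 x y S + Hg F1 F2 x y T.
Proof.
move=> h1 h2 ST; rewrite /Hg !probU //.
by rewrite !mulrDr opprD !addrA; congr (_ + _); rewrite -!addrA; congr (_ + _); rewrite addrC.
Qed.

Lemma Hg_part F1 F2 x y (C : set (set E)) L :
  is_distr F1 -> is_distr F2 -> 0 <= x -> 0 <= y ->
  (forall C1 C2 e, C C1 -> C C2 -> C1 e -> C2 e -> C1 = C2) ->
  (forall e, L e -> exists2 c, C c & c e) ->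
  (forall c, C c -> 0 <= Hg F1 F2 x y (L `&` c)) ->
  0 <= Hg F1 F2 x y L.
Proof.
move=> h1 h2 x0 y0 dj cov hc; rewrite /Hg subr_ge0.
apply: (part_ineq _ _ _ _ _ _ h1 h2 x0 y0 dj cov) => c /hc; rewrite /Hg subr_ge0 //.
Qed.

Lemma Hg_part_strict F1 F2 x y (C : set (set E)) L c0 :
  is_distr F1 -> is_distr F2 -> 0 <= x -> 0 <= y ->
  (forall C1 C2 e, C C1 -> C C2 -> C1 e -> C2 e -> C1 = C2) ->
  (forall e, L e -> exists2 c, C c & c e) ->
  (forall c, C c -> 0 <= Hg F1 F2 x y (L `&` c)) ->
  C c0 -> 0 < Hg F1 F2 x y (L `&` c0) ->
  0 < Hg F1 F2 x y L.
Proof.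
move=> h1 h2 x0 y0 dj cov hc Cc0 hc0.
have eL : L = (L `&` c0) `|` (L `&` ~` c0) by rewrite -setIUr setUCr setIT.
have dL : (L `&` c0) `&` (L `&` ~` c0) = set0.
  by apply/seteqP; split => e // [[_ h] [_ h']].
rewrite eL HgU //.
have : 0 <= Hg F1 F2 x y (L `&` ~` c0).
  apply: (Hg_part _ _ _ _ _ _ h1 h2 x0 y0 dj) => [e [Le _]|c Cc]; first exact: cov.
  have [->|nc] := pselect (c = c0).
    by rewrite -setIA setICl setI0 Hg0.
  have -> : L `&` ~` c0 `&` c = L `&` c; last exact: hc.
  apply/seteqP; split => e; first by move=> [[]].
  move=> [Le ce]; split => //; split => // c0e; apply: nc.
  exact: (dj _ _ _ Cc Cc0 ce c0e).
move: hc0; lra.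
Qed.

Lemma Hg_lim F1 F2 x y (G : set (set E)) W :
  is_distr F1 -> is_distr F2 -> 0 <= x -> 0 <= y ->
  (exists G0, G G0) ->
  (forall G1 G2, G G1 -> G G2 -> G1 `<=` G2 \/ G2 `<=` G1) ->
  (forall G1, G G1 -> W `<=` G1) ->
  (forall e, (forall G1, G G1 -> G1 e) -> W e) ->
  (forall G1, G G1 -> 0 <= Hg F1 F2 x y G1) ->
  0 <= Hg F1 F2 x y W.
Proof.
move=> h1 h2 x0 y0 ne ch Ws Wi hG; rewrite /Hg subr_ge0.
apply: (lim_ineq _ _ _ _ _ _ h1 h2 x0 y0 ne ch Ws Wi) => G1 /hG; rewrite /Hg subr_ge0 //.
Qed.

End Hg.

Section Main.
Context {R : realType} {E : countType} (pi0 : R) (FG FB : E -> R) (phi : R -> R).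
Hypotheses (hpi : 0 < pi0 < 1) (hG : is_distr FG) (hB : is_distr FB)
  (hpos : forall e, 0 < FG e \/ 0 < FB e)
  (hphi : forall mu1 mu2, 0 <= mu1 <= 1 -> 0 <= mu2 <= 1 -> mu1 < mu2 -> phi mu1 < phi mu2).
Implicit Types (S T L W : set E).

Let g S := prob FG S * pi0.
Let k S := prob FB S * (1 - pi0).

Let g_ge0 S : 0 <= g S.
Proof. by rewrite /g mulr_ge0 ?prob_ge0 //; case/andP: hpi => /ltW. Qed.
Let k_ge0 S : 0 <= k S.
Proof. by rewrite /k mulr_ge0 ?prob_ge0 // subr_ge0; case/andP: hpi => _ /ltW. Qed.

Let den_pos S : S !=set0 -> 0 < g S + k S.
Proof.
move=> [e Se]; case/andP: hpi => p0 p1.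
have := prob_ge1 FG S e hG Se; have := prob_ge1 FB S e hB Se.
have := prob_ge0 FG S hG; have := prob_ge0 FB S hB.
rewrite /g /k; case: (hpos e) => h; nra.
Qed.

Let nuE S : nu pi0 FG FB S = g S / (g S + k S).
Proof. by []. Qed.

Lemma nu01 S : 0 <= nu pi0 FG FB S <= 1.
Proof.
rewrite nuE; have := g_ge0 S; have := k_ge0 S => k0 g0.
have [->|d0] := eqVneq (g S + k S) 0; first by rewrite invr0 mulr0 lexx ler01.
have dp : 0 < g S + k S by rewrite lt_def d0 addr_ge0.
by rewrite divr_ge0 ?addr_ge0 //= ler_pdivrMr // mul1r lerDl.
Qed.

Lemma nu_leE S T : S !=set0 -> T !=set0 ->
  (nu pi0 FG FB S <= nu pi0 FG FB T) = (g S * k T <= g T * k S).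
Proof.
move=> /den_pos hS /den_pos hT; rewrite !nuE ler_pdivrMr // mulrAC ler_pdivlMr //.
by rewrite !mulrDr [g T * g S]mulrC lerD2l.
Qed.

Lemma xi_le S T : (xi phi pi0 FG FB S <= xi phi pi0 FG FB T) <-> (nu pi0 FG FB S <= nu pi0 FG FB T).
Proof.
rewrite /xi; split => h.
  rewrite leNgt; apply/negP => /(hphi _ _ (nu01 T) (nu01 S)); rewrite ltNge h //.
move: h; rewrite le_eqVlt => /orP [/eqP -> //|/(hphi _ _ (nu01 S) (nu01 T)) /ltW //].
Qed.

Lemma xi_lt S T : (xi phi pi0 FG FB S < xi phi pi0 FG FB T) <-> (nu pi0 FG FB S < nu pi0 FG FB T).
Proof.
split => h; rewrite ltNge; apply/negP => /xi_le; rewrite leNgt h //.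
Qed.

Let H T S := g S * k T - g T * k S.

Let H_Hg T S : H T S = Hg FG FB (pi0 * k T) ((1 - pi0) * g T) S.
Proof. by rewrite /H /Hg /g /k; ring. Qed.

Let H_neg T S : - H T S = Hg FB FG ((1 - pi0) * g T) (pi0 * k T) S.
Proof. by rewrite /H /Hg /g /k; ring. Qed.

Let c1_ge0 T : 0 <= pi0 * k T.
Proof. by rewrite mulr_ge0 // ; case/andP: hpi => /ltW. Qed.
Let c2_ge0 T : 0 <= (1 - pi0) * g T.
Proof. by rewrite mulr_ge0 // subr_ge0; case/andP: hpi => _ /ltW. Qed.

Let H_ge0E T S : S !=set0 -> T !=set0 ->
  (nu pi0 FG FB T <= nu pi0 FG FB S) = (0 <= H T S).
Proof. by move=> hS hT; rewrite nu_leE // /H subr_ge0. Qed.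

Let H_gt0E T S : S !=set0 -> T !=set0 ->
  (nu pi0 FG FB T < nu pi0 FG FB S) = (0 < H T S).
Proof. by move=> hS hT; rewrite ltNge nu_leE // /H subr_gt0 ltNge. Qed.

Let H0 T : H T set0 = 0.
Proof. by rewrite H_Hg Hg0. Qed.

Let HU T S1 S2 : S1 `&` S2 = set0 -> H T (S1 `|` S2) = H T S1 + H T S2.
Proof. by move=> d; rewrite !H_Hg HgU. Qed.

Let Hself T : H T T = 0.
Proof. by rewrite /H subrr. Qed.

Let H_part (C : set (set E)) L T :
  (forall C1 C2 e, C C1 -> C C2 -> C1 e -> C2 e -> C1 = C2) ->
  (forall e, L e -> exists2 c, C c & c e) ->
  (forall c, C c -> 0 <= H T (L `&` c)) -> 0 <= H T L.
Proof.
move=> dj cov hc; rewrite H_Hg; apply: (Hg_part _ _ _ _ _ _ hG hB _ _ dj cov) => // c /hc.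
by rewrite H_Hg.
Qed.

Let H_part_neg (C : set (set E)) L T :
  (forall C1 C2 e, C C1 -> C C2 -> C1 e -> C2 e -> C1 = C2) ->
  (forall e, L e -> exists2 c, C c & c e) ->
  (forall c, C c -> H T (L `&` c) <= 0) -> H T L <= 0.
Proof.
move=> dj cov hc; rewrite -oppr_ge0 H_neg; apply: (Hg_part _ _ _ _ _ _ hB hG _ _ dj cov) => // c /hc.
by rewrite -H_neg oppr_ge0.
Qed.

Let H_part_strict (C : set (set E)) L T c0 :
  (forall C1 C2 e, C C1 -> C C2 -> C1 e -> C2 e -> C1 = C2) ->
  (forall e, L e -> exists2 c, C c & c e) ->
  (forall c, C c -> 0 <= H T (L `&` c)) -> C c0 -> 0 < H T (L `&` c0) -> 0 < H T L.
Proof.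
move=> dj cov hc Cc0; rewrite !H_Hg => hc0.
apply: (Hg_part_strict _ _ _ _ _ _ _ hG hB _ _ dj cov _ Cc0 hc0) => // c /hc.
by rewrite H_Hg.
Qed.

Let H_part_strict_neg (C : set (set E)) L T c0 :
  (forall C1 C2 e, C C1 -> C C2 -> C1 e -> C2 e -> C1 = C2) ->
  (forall e, L e -> exists2 c, C c & c e) ->
  (forall c, C c -> H T (L `&` c) <= 0) -> C c0 -> H T (L `&` c0) < 0 -> H T L < 0.
Proof.
move=> dj cov hc Cc0 hc0'.
have : 0 < - H T (L `&` c0) by rewrite oppr_gt0.
rewrite H_neg => hc0; rewrite -oppr_gt0 H_neg.
apply: (Hg_part_strict _ _ _ _ _ _ _ hB hG _ _ dj cov _ Cc0 hc0) => // c /hc.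
by rewrite -H_neg oppr_ge0.
Qed.

Let H_lim (G : set (set E)) W T :
  (exists G0, G G0) ->
  (forall G1 G2, G G1 -> G G2 -> G1 `<=` G2 \/ G2 `<=` G1) ->
  (forall G1, G G1 -> W `<=` G1) ->
  (forall e, (forall G1, G G1 -> G1 e) -> W e) ->
  (forall G1, G G1 -> 0 <= H T G1) -> 0 <= H T W.
Proof.
move=> ne ch Ws Wi hg; rewrite H_Hg; apply: (Hg_lim _ _ _ _ _ _ hG hB _ _ ne ch Ws Wi) => // G1 /hg.
by rewrite H_Hg.
Qed.

Context (le : E -> E -> Prop) (P : set (set E)) (leP : set E -> set E -> Prop).
Hypothesis hop : ordered_partition P leP.

Let op_ne {A} : P A -> A !=set0.
Proof. by case: hop => h _; apply: h. Qed.
Let cell e : exists2 C, P C & C e.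
Proof. by case: hop => _ [_ [h _]]; apply: h. Qed.
Let cuniq {C1 C2 e} : P C1 -> P C2 -> C1 e -> C2 e -> C1 = C2.
Proof.
case: hop => _ [hd _] p1 p2 e1 e2; apply: contrapT => ne.
by have : (C1 `&` C2) e by []; rewrite hd.
Qed.
Let lrefl {A} : P A -> leP A A.
Proof. by case: hop => _ [_ [_ [h _]]]; apply: h. Qed.
Let lanti {A1 A2} : P A1 -> P A2 -> leP A1 A2 -> leP A2 A1 -> A1 = A2.
Proof. by case: hop => _ [_ [_ [_ [h _]]]]; apply: h. Qed.
Let ltrans {A1 A2 A3} : P A1 -> P A2 -> P A3 -> leP A1 A2 -> leP A2 A3 -> leP A1 A3.
Proof. by case: hop => _ [_ [_ [_ [_ [h _]]]]]; apply: h. Qed.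
Let ltot {A1 A2} : P A1 -> P A2 -> leP A1 A2 \/ leP A2 A1.
Proof. by case: hop => _ [_ [_ [_ [_ [_ h]]]]]; apply: h. Qed.

Let rem_iff {A C e} : P A -> P C -> C e -> (remaining P leP A e <-> leP A C).
Proof.
move=> PA PC Ce; split.
  move=> hr; have [//|hCA] := ltot PA PC.
  have [->|nCA] := pselect (C = A); first exact: lrefl.
  by exfalso; apply: hr; exists C.
move=> hAC [A' [PA' [hA'A nA'A]] A'e].
have eA' := cuniq PA' PC A'e Ce; subst A'.
by apply: nA'A; apply: lanti.
Qed.

Let U (p : set E -> Prop) := [set e | exists2 C, P C /\ p C & C e].

Let U_cap {p c} : P c -> p c -> U p `&` c = c.
Proof.
move=> Pc pc; apply/seteqP; split => e; first by move=> [].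
by move=> ce; split => //; exists c.
Qed.
Let U_dj p C1 C2 e : [set C | P C /\ p C] C1 -> [set C | P C /\ p C] C2 -> C1 e -> C2 e -> C1 = C2.
Proof. by move=> [h1 _] [h2 _]; apply: cuniq. Qed.
Let U_cov p e : U p e -> exists2 c, [set C | P C /\ p C] c & c e.
Proof. by []. Qed.
Let U_ne {p c} : P c -> p c -> U p !=set0.
Proof. by move=> Pc pc; have [e ce] := op_ne Pc; exists e, c. Qed.

Definition cross_mono := forall A1 A2 e1 e2, P A1 -> P A2 -> A1 e1 -> A2 e2 -> le e1 e2 -> leP A1 A2.

Let U_lower X p : cross_mono -> P X -> p X -> (forall C, P C -> p C -> leP X C) ->
  (forall C C', P C -> P C' -> p C -> leP X C' -> leP C' C -> p C') ->
  lower_contour le (remaining P leP X) (U p).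
Proof.
move=> h2 PX pX hX hd; split; first exact: (U_ne PX).
split; first by move=> e [C [PC pC] Ce]; apply/(rem_iff PX PC Ce)/hX.
move=> e e' [C [PC pC] Ce] re' le'.
have [C' PC' C'e'] := cell e'; exists C' => //; split => //.
apply: (hd C) => //; first exact/(rem_iff PX PC' C'e').
exact: h2 le'.
Qed.

Let xiF := xi phi pi0 FG FB.
Let nuF := nu pi0 FG FB.

Lemma fwd : equilibrium_partition le xiF P leP ->
  forall A, P A -> minimizer le xiF (remaining P leP A) A /\
    forall L, minimizer le xiF (remaining P leP A) L -> L `<=` A.
Proof.
move=> [_ [h1 [h2 h3]]] A PA.
have lowA : lower_contour le (remaining P leP A) A.
  split; first exact: op_ne.
  split; first by move=> e Ae; apply/(rem_iff PA PA Ae)/lrefl.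
  move=> e e' Ae re' le'; have [C' PC' C'e'] := cell e'.
  have := h2 _ _ _ _ PC' PA C'e' Ae le'; have := (rem_iff PA PC' C'e').1 re'.
  by move=> l1 l2; rewrite (lanti PA PC' l1 l2).
set Cs := [set C | P C /\ leP A C].
have dj : forall C1 C2 e, Cs C1 -> Cs C2 -> C1 e -> C2 e -> C1 = C2.
  by move=> C1 C2 e [] + _ [] + _; apply: cuniq.
have cov L : L `<=` remaining P leP A -> forall e, L e -> exists2 c, Cs c & c e.
  move=> LS e /LS re; have [C PC Ce] := cell e; exists C => //; split => //.
  exact/(rem_iff PA PC Ce).
have piece L c : lower_contour le (remaining P leP A) L -> Cs c -> (L `&` c) !=set0 ->
    0 <= H A (L `&` c) /\ (c <> A -> 0 < H A (L `&` c)).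
  move=> [Lne [LS Llow]] [Pc hAc] ne.
  have lowc : lower_contour le c (L `&` c).
    split => //; split; first by move=> e [].
    move=> e e' [Le ce] ce' le'; split => //; apply: (Llow e) => //.
    exact/(rem_iff PA Pc ce').
  have hc : nuF c <= nuF (L `&` c) by apply/xi_le; apply: h3.
  have [eA|nA] := pselect (c = A).
    subst c; split => //; rewrite -H_ge0E //; exact: op_ne.
  have hAc' : nuF A < nuF c.
    by apply/(xi_lt A c); apply: h1 => //; split => // eq; apply: nA; rewrite eq.
  have hlt : nuF A < nuF (L `&` c) := lt_le_trans hAc' hc.
  split; first by rewrite -(H_ge0E A (L `&` c) ne (op_ne PA)); exact: ltW.
  by move=> _; rewrite -(H_gt0E A (L `&` c) ne (op_ne PA)).
have geA L : lower_contour le (remaining P leP A) L -> 0 <= H A L.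
  move=> hL; apply: (H_part _ _ _ dj (cov _ hL.2.1)) => c Cc.
  have [ne|e0] := pselect ((L `&` c) !=set0); first by case: (piece _ _ hL Cc ne).
  by move/set0P/negP: e0; rewrite negbK => /eqP ->; rewrite H0.
split.
  split => // L hL; apply/xi_le; rewrite /nuF (H_ge0E A L hL.1 (op_ne PA)); exact: geA.
move=> L [hL hmin] e Le; apply: contrapT => nAe.
have [c Pc ce] := cell e.
have ncA : c <> A by move=> cA; apply: nAe; rewrite -cA.
have Cc : Cs c by split => //; apply/(rem_iff PA Pc ce); apply: hL.2.1.
have ne : (L `&` c) !=set0 by exists e.
have hpos' : 0 < H A L.
  apply: (H_part_strict _ _ _ _ dj (cov _ hL.2.1) _ Cc); last by case: (piece _ _ hL Cc ne) => _; apply.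
  move=> c' Cc'; have [ne'|e0] := pselect ((L `&` c') !=set0); first by case: (piece _ _ hL Cc' ne').
  by move/set0P/negP: e0; rewrite negbK => /eqP ->; rewrite H0.
have := hmin A lowA; move/xi_le; rewrite /nuF (H_ge0E L A (op_ne PA) hL.1).
move=> h; have hA : H A L = - H L A by rewrite /H opprB.
by move: h hpos'; rewrite hA; lra.
Qed.

Let lt_le {a b c} : P a -> P b -> P c -> Defs.ltP leP a b -> leP b c -> Defs.ltP leP a c.
Proof.
move=> Pa Pb Pc [hab nab] hbc; split; first exact: ltrans hab hbc.
by move=> eac; subst c; apply: nab; apply: lanti.
Qed.
Let le_lt {a b c} : P a -> P b -> P c -> leP a b -> Defs.ltP leP b c -> Defs.ltP leP a c.
Proof.
move=> Pa Pb Pc hab [hbc nbc]; split; first exact: ltrans hab hbc.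
by move=> eac; subst c; apply: nbc; apply: lanti.
Qed.

Lemma bwd : (forall A, P A -> minimizer le xiF (remaining P leP A) A /\
    forall L, minimizer le xiF (remaining P leP A) L -> L `<=` A) ->
  equilibrium_partition le xiF P leP.
Proof.
move=> hR.
have lowA A : P A -> lower_contour le (remaining P leP A) A.
  by move=> PA; case: (hR A PA) => [[]].
have h3 : forall A L, P A -> lower_contour le A L -> xiF A <= xiF L.
  move=> A L PA [Lne [LA Llow]]; apply: (hR A PA).1.2; split => //; split.
    by move=> e /LA Ae; exact: (lowA A PA).2.1 _ Ae.
  move=> e e' Le re' le'; apply: (Llow e) => //.
  exact: (lowA A PA).2.2 e e' (LA _ Le) re' le'.
have h2 : cross_mono.
  move=> A1 A2 e1 e2 P1 P2 A1e1 A2e2 le12.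
  have [//|l21] := ltot P1 P2.
  have [->|n12] := pselect (A1 = A2); first exact: lrefl.
  exfalso; have re1 : remaining P leP A2 e1 by apply/(rem_iff P2 P1 A1e1).
  have A2e1 := (lowA A2 P2).2.2 e2 e1 A2e2 re1 le12.
  by apply: n12; apply: cuniq P1 P2 A1e1 A2e1.
have strict X L : P X -> lower_contour le (remaining P leP X) L -> ~ (L `<=` X) -> nuF X < nuF L.
  move=> PX hL nLX; apply/(xi_lt X L).
  rewrite lt_neqAle ((hR X PX).1.2 L hL) andbT; apply/eqP => eXL.
  apply: nLX; apply: (hR X PX).2; split => // L' hL'.
  by move: eXL ((hR X PX).1.2 L' hL'); rewrite /xiF => <-.
pose Ioc Z Y := U (fun C => Defs.ltP leP Z C /\ leP C Y).
have IocH Z Y : P Z -> P Y -> Defs.ltP leP Z Y -> 0 < H Z (Ioc Z Y).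
  move=> PZ PY hZY.
  pose Icc := U (fun C => leP Z C /\ leP C Y).
  have lowI : lower_contour le (remaining P leP Z) Icc.
    apply: U_lower => //; first by split; [exact: lrefl| exact: hZY.1].
      by move=> C _ [].
    move=> C C' PC PC' [_ hCY] hZC' hC'C; split => //; exact: ltrans hC'C hCY.
  have nsub : ~ (Icc `<=` Z).
    have [e Ye] := op_ne PY => hsub.
    have : Icc e by exists Y => //; split => //; split; [exact: hZY.1|exact: lrefl].
    by move/hsub => Ze; apply: hZY.2; apply: cuniq PZ PY Ze Ye.
  have := strict Z Icc PZ lowI nsub.
  have IccE : Icc = Z `|` Ioc Z Y.
    apply/seteqP; split => e.
      move=> [C [PC [hZC hCY]] Ce]; have [eCZ|nCZ] := pselect (C = Z).
        by left; rewrite -eCZ.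
      by right; exists C => //; split => //; split => //; split => // eZC; apply: nCZ; rewrite eZC.
    move=> [Ze|[C [PC [[hZC _] hCY]] Ce]]; last by exists C.
    by exists Z => //; split => //; split; [exact: lrefl| exact: hZY.1].
  have dj : Z `&` Ioc Z Y = set0.
    apply/seteqP; split => e // [Ze [C [PC [[_ nZC] _]] Ce]].
    by apply: nZC; apply: cuniq PZ PC Ze Ce.
  rewrite (H_gt0E Z Icc (U_ne PY (conj hZY.1 (lrefl PY))) (op_ne PZ)).
  by rewrite IccE HU // Hself add0r.
have IocNE Z Y : P Y -> Defs.ltP leP Z Y -> Ioc Z Y !=set0.
  by move=> PY hZY; apply: (U_ne PY); split => //; exact: lrefl.
have nondec X Y : P X -> P Y -> Defs.ltP leP X Y -> nuF X <= nuF Y.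
  move=> PX PY hXY; rewrite leNgt; apply/negP => hYX.
  pose Gs := [set Z | P Z /\ leP X Z /\ Defs.ltP leP Z Y /\ nuF X <= nuF Z].
  pose Gf := [set O | exists2 Z, Gs Z & O = Ioc Z Y].
  pose pW := fun C => leP C Y /\ forall Z, Gs Z -> Defs.ltP leP Z C.
  have GX : Gs X by split => //; split; [exact: lrefl| split => //].
  have hW : 0 <= H X (U pW).
    apply: (H_lim Gf (U pW) X).
    - by exists (Ioc X Y), X.
    - move=> G1 G2 [Z1 [PZ1 _] ->] [Z2 [PZ2 _] ->].
      have [l12|l21] := ltot PZ1 PZ2.
        right => e [C [PC [lt2 hCY]] Ce]; exists C => //; split => //; split => //.
        exact: le_lt PZ1 PZ2 PC l12 lt2.
      left => e [C [PC [lt1 hCY]] Ce]; exists C => //; split => //; split => //.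
      exact: le_lt PZ2 PZ1 PC l21 lt1.
    - move=> G1 [Z hZ ->] e [C [PC [hCY hall]] Ce]; exists C => //; split => //; split => //.
      exact: hall.
    - move=> e hall; have [C PC Ce] := cell e; exists C => //; split => //.
      have hC Z : Gs Z -> Defs.ltP leP Z C /\ leP C Y.
        move=> hZ; have [C' [PC' hC'] C'e] := hall (Ioc Z Y) (ex_intro2 _ _ Z hZ erefl).
        by rewrite -(cuniq PC' PC C'e Ce).
      by split; [exact: (hC X GX).2| move=> Z /hC []].
    - move=> G1 [Z [PZ [hXZ [hZY hXZn]]] ->].
      have := IocH Z Y PZ PY hZY.
      rewrite -(H_gt0E Z (Ioc Z Y) (IocNE Z Y PY hZY) (op_ne PZ)) => h.
      rewrite -(H_ge0E X (Ioc Z Y) (IocNE Z Y PY hZY) (op_ne PX)).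
      exact/ltW/(le_lt_trans hXZn h).
  have YW : [set C | P C /\ pW C] Y.
    by split => //; split; [exact: lrefl| move=> Z [_ [_ []]]].
  have : H X (U pW) < 0.
    apply: (H_part_strict_neg [set C | P C /\ pW C] (U pW) X Y (U_dj pW) (U_cov pW) _ YW).
      move=> c [Pc pc]; rewrite (U_cap Pc pc) leNgt.
      rewrite -(H_gt0E X c (op_ne Pc) (op_ne PX)); apply/negP => hXc.
      have cGs : Gs c.
        split => //; split; first exact: ((pc.2 X GX).1).
        split; last exact: ltW.
        split; first exact: pc.1.
        by move=> eY; subst c; move: hYX; rewrite ltNge (ltW hXc).
      by have [_] := pc.2 c cGs.
    rewrite (U_cap PY YW.2).
    have : 0 < H Y X by rewrite -(H_gt0E Y X (op_ne PX) (op_ne PY)).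
    by rewrite /H; lra.
  by move: hW; lra.
split => //; split; last by split.
move=> X Y PX PY hXY; apply/(xi_lt X Y).
rewrite lt_neqAle (nondec X Y PX PY hXY) andbT; apply/eqP => eXY.
have hXY0 : H X Y = 0.
  have := nu_leE X Y (op_ne PX) (op_ne PY); have := nu_leE Y X (op_ne PY) (op_ne PX).
  rewrite /nuF in eXY; rewrite eXY lexx /H => /esym q1 /esym q2; lra.
pose Ioo := U (fun C => Defs.ltP leP X C /\ Defs.ltP leP C Y).
have IocE : Ioc X Y = Ioo `|` Y.
  apply/seteqP; split => e.
    move=> [C [PC [hXC hCY]] Ce]; have [eCY|nCY] := pselect (C = Y).
      by right; rewrite -eCY.
    by left; exists C => //; split => //; split.
  move=> [[C [PC [hXC [hCY _]]] Ce]|Ye]; first by exists C.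
  by exists Y => //; split => //; split => //; exact: lrefl.
have dj : Ioo `&` Y = set0.
  apply/seteqP; split => e // [[C [PC [_ [_ nCY]]] Ce] Ye].
  by apply: nCY; apply: cuniq PC PY Ce Ye.
have hIoo : 0 < H X Ioo.
  by have := IocH X Y PX PY hXY; rewrite IocE HU // hXY0 addr0.
have [C [PC [hXC hCY]] hlt] : exists2 C, P C /\ Defs.ltP leP X C /\ Defs.ltP leP C Y & nuF X < nuF C.
  apply: contrapT => hno.
  have : H X Ioo <= 0.
    apply: (H_part_neg [set C | P C /\ (Defs.ltP leP X C /\ Defs.ltP leP C Y)] Ioo X (U_dj _) (U_cov _)).
    move=> c [Pc pc]; rewrite (U_cap Pc pc) leNgt.
    rewrite -(H_gt0E X c (op_ne Pc) (op_ne PX)); apply/negP => hXc.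
    by apply: hno; exists c.
  by move: hIoo; lra.
have := nondec C Y PC PY hCY; rewrite /nuF -eXY => h.
by move: hlt; rewrite /nuF ltNge h.
Qed.

End Main.

Theorem theorem3 (R : realType) (E : countType)
  (pi0 : R) (FG FB : E -> R) (le : E -> E -> Prop)
  (uR : R -> state -> R) (phi : R -> R)
  (P : set (set E)) (leP : set E -> set E -> Prop) :
  0 < pi0 < 1 ->
  is_distr FG -> is_distr FB ->
  (forall e, 0 < FG e \/ 0 < FB e) ->
  disclosure_rule le ->
  receiver_best_response uR phi ->
  (forall mu1 mu2, 0 <= mu1 <= 1 -> 0 <= mu2 <= 1 -> mu1 < mu2 -> phi mu1 < phi mu2) ->
  ordered_partition P leP ->
  (equilibrium_partition le (xi phi pi0 FG FB) P leP <->
   forall A, P A ->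
     minimizer le (xi phi pi0 FG FB) (remaining P leP A) A /\
     forall L, minimizer le (xi phi pi0 FG FB) (remaining P leP A) L -> L `<=` A).
Proof.
move=> hpi hG hB hpos _ _ hphi hop; split.
  exact: (fwd _ _ _ _ hpi hG hB hpos hphi _ _ _ hop).
exact: (bwd _ _ _ _ hpi hG hB hpos hphi _ _ _ hop).
Qed.
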